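(* Let $L$ be a finite simplicial complex and $L^\circ=L\cup\{\varnothing\}$. For $x\in L^\circ$ put $\mu_L(x)=1-\chi(\operatorname{lk}_Lx)$, with the convention $\operatorname{lk}_L\varnothing=L$. Then for all $y,z\in L^\circ$, $$\sum_{x\in L^\circ,\ x\cap y=z}\mu_L(x)=\begin{cases}1&\text{if } y=z,\\0&\text{otherwise.}\end{cases}$$
   Context: $\chi$ is the Euler characteristic and $\operatorname{lk}_Lx$ the link of the simplex $x$ in $L$ (the empty complex has $\chi=0$). The intersection of two simplices of $L$ is a common face or empty, hence an element of $L^\circ$. *)

(* Defs.v *)
From mathcomp Require Import all_boot all_order all_algebra.
Set Implicit Arguments. Unset Strict Implicit. Unset Printing Implicit Defensive.
Import GRing.Theory Num.Theory.
Local Open Scope ring_scope.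

Definition simplicial_complex (V : finType) (L : {set {set V}}) : Prop :=
  set0 \notin L /\
  (forall s t : {set V}, s \in L -> t \subset s -> t != set0 -> t \in L).

Definition Lcirc (V : finType) (L : {set {set V}}) : {set {set V}} :=
  set0 |: L.

(* Link of x in L: simplices s of L disjoint from x with s ∪ x ∈ L.
   For x = ∅ this is L itself (matching the convention lk_L ∅ = L). *)
Definition link (V : finType) (L : {set {set V}}) (x : {set V}) : {set {set V}} :=
  [set s in L | [disjoint s & x] && (s :|: x \in L)].

Definition euler_char (V : finType) (K : {set {set V}}) : int :=
  \sum_(s in K) (-1) ^+ (#|s|.-1).

Definition mu (V : finType) (L : {set {set V}}) (x : {set V}) : int :=
  1 - euler_char (link L x).

(* Main.v *)
Require Import Defs.
From mathcomp Require Import all_boot all_order all_algebra.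
Import GRing.Theory Num.Theory.
Local Open Scope ring_scope.
Set Implicit Arguments. Unset Strict Implicit.

Section Aux.
Variable V : finType.

Definition sg (x : {set V}) : int := (-1) ^+ #|x|.

Lemma sg2 x : sg x * sg x = 1.
Proof. by rewrite /sg -exprD addnn -mul2n exprM expr2 mulrNN mulr1 expr1n. Qed.

Definition tg (a : V) (x : {set V}) := if a \in x then x :\ a else a |: x.

Lemma in_tg a x b : (b \in tg a x) = (if b == a then a \notin x else b \in x).
Proof.
rewrite /tg; case: ifP => ax; rewrite !inE; by case: eqP.
Qed.

Lemma tgK a : involutive (tg a).
Proof. by move=> x; apply/setP=> b; rewrite !in_tg eqxx negbK; by case: eqP => [->|]. Qed.

Lemma sg_tg a x : sg (tg a x) = - sg x.
Proof.
rewrite /sg /tg; case: (boolP (a \in x)) => ax.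
  by rewrite [in RHS](cardsD1 a x) ax exprS mulN1r opprK.
by rewrite cardsU1 ax exprS mulN1r.
Qed.

Lemma toggle_sum a (P : pred {set V}) (F : {set V} -> int) :
  (forall x, P x -> P (tg a x)) -> (forall x, F (tg a x) = - F x) ->
  \sum_(x | P x) F x = 0.
Proof.
move=> HP HF.
have E : \sum_(x | P x) F x = \sum_(x | P x) F (tg a x).
  rewrite (reindex_inj (can_inj (tgK a))) /=.
  apply: eq_bigl => x; apply/idP/idP; first by move/HP; rewrite tgK.
  exact: HP.
move: E; rewrite (eq_bigr _ (fun x _ => HF x)) sumrN.
set S := \sum_(x | P x) F x => /eqP; rewrite -subr_eq0 opprK => /eqP.
by rewrite -mulr2n => /eqP; rewrite mulrn_eq0 orFb => /eqP.
Qed.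

Lemma sub_Lcirc (L : {set {set V}}) (HL : simplicial_complex L) (w x : {set V}) :
  w \in Lcirc L -> x \subset w -> x \in Lcirc L.
Proof.
rewrite /Lcirc !inE => /orP[/eqP-> | wL] xw.
  by move: xw; rewrite subset0 => ->.
case: eqVneq => //= xn0; exact: HL.2 _ _ wL xw xn0.
Qed.

Lemma mu_sum (L : {set {set V}}) (HL : simplicial_complex L) (x : {set V}) :
  x \in Lcirc L -> mu L x = sg x * \sum_(w | (w \in Lcirc L) && (x \subset w)) sg w.
Proof.
move=> xL.
have n0lk : set0 \notin link L x by rewrite /link inE (negbTE HL.1).
have E1 : mu L x = \sum_(t in set0 |: link L x) sg t.
  rewrite big_setU1 //= /mu /euler_char /sg cards0 expr0 -sumrN.
  congr (_ + _); apply: eq_bigr => t.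
  rewrite inE => /andP[tL _].
  have : t != set0 by apply: contraNneq HL.1 => <-.
  rewrite -card_gt0; case: #|t| => // n _ /=.
  by rewrite exprS mulN1r.
have dis : forall t, t \in set0 |: link L x -> t :&: x = set0.
  move=> t; rewrite !inE => /orP[/eqP->|/andP[_ /andP[d _]]]; first by rewrite set0I.
  exact: disjoint_setI0.
have E2 : \sum_(t in set0 |: link L x) sg t =
          sg x * \sum_(t in set0 |: link L x) sg (t :|: x).
  rewrite mulr_sumr; apply: eq_bigr => t /dis tx.
  rewrite /sg cardsU tx cards0 subn0 exprD mulrCA.
  by have := sg2 x; rewrite /sg => ->; rewrite mulr1.
rewrite E1 E2 -big_imset /=; last first.
  have key : forall t, t :&: x = set0 -> (t :|: x) :\: x = t.
    move=> t tx; apply/setP=> b; rewrite !inE.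
    case bx: (b \in x); rewrite /= ?orbF //.
    by have := tx; move/setP/(_ b); rewrite !inE bx andbT => ->.
  by move=> s t /dis sx /dis tx E; rewrite -(key s sx) -(key t tx) E.
congr (_ * _); apply: eq_bigl => w.
apply/imsetP/andP.
  case=> t; rewrite !inE => /orP[/eqP->|/andP[_ /andP[_ tL]]] ->.
    by rewrite set0U subxx; split => //; move: xL; rewrite !inE.
  by split; [rewrite tL orbT | apply/subsetP => b bx; rewrite inE bx orbT].
case=> wL xw; exists (w :\: x).
  rewrite !inE; case: eqVneq => //= wx0.
  have wn0 : w != set0.
    by apply: contraNneq wx0 => ->; rewrite set0D.
  have wL' : w \in L by move: wL; rewrite /Lcirc !inE (negbTE wn0).
  rewrite (HL.2 _ _ wL' (subsetDl w x) wx0) /=.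
  have -> : w :\: x :|: x = w.
    apply/setP=> b; rewrite !inE; case: (boolP (b \in x)) => bx; rewrite ?orbF ?orbT //.
    by rewrite (subsetP xw).
  rewrite wL' andbT -setI_eq0; apply/eqP/setP=> b; rewrite !inE.
  by case: (b \in x); rewrite ?andbF.
apply/setP=> b; rewrite !inE; case: (boolP (b \in x)) => //= bx.
  by rewrite (subsetP xw).
by rewrite orbF.
Qed.

Lemma tg_sub a (x w : {set V}) : x \subset w -> a \in w -> tg a x \subset w.
Proof.
move=> xw aw; apply/subsetP=> b; rewrite in_tg; case: eqP => [->|_] //.
exact: (subsetP xw).
Qed.

Lemma sub_tg a (z x : {set V}) : z \subset x -> a \notin z -> z \subset tg a x.
Proof.
move=> zx az; apply/subsetP=> b bz; rewrite in_tg; case: eqP => [eba|_].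
  by move: az; rewrite -eba bz.
exact: (subsetP zx).
Qed.

Lemma tgI a (x y : {set V}) : a \notin y -> tg a x :&: y = x :&: y.
Proof.
move=> ay; apply/setP=> b; rewrite !inE in_tg; case: eqP => [->|_] //.
by rewrite (negbTE ay) !andbF.
Qed.

End Aux.

Theorem mainTheorem9 (V : finType) (L : {set {set V}})
    (HL : simplicial_complex L) (y z : {set V})
    (Hy : y \in Lcirc L) (Hz : z \in Lcirc L) :
  \sum_(x in Lcirc L | x :&: y == z) mu L x = (if y == z then 1 else 0).
Proof.
rewrite (eq_bigr (fun x : {set V} => \sum_(w : {set V} | (w \in Lcirc L) && (x \subset w)) sg x * sg w));
  last by move=> x /andP[xL _]; rewrite mu_sum // mulr_sumr.
rewrite (exchange_big_dep (fun w => w \in Lcirc L)) /=; last by move=> x w _ /andP[].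
have inner : forall w, w \in Lcirc L ->
  \sum_(x | ((x \in Lcirc L) && (x :&: y == z)) && ((w \in Lcirc L) && (x \subset w)))
     sg x * sg w = if (w \subset y) && (z \subset w) then sg z * sg w else 0.
  move=> w wL; case: (boolP (w \subset y)) => wy /=.
    case: (boolP (z \subset w)) => zw.
      rewrite (eq_bigl (pred1 z)) ?big_pred1_eq // => x /=.
      apply/idP/idP.
        case/andP=> /andP[_ /eqP <-] /andP[_ xw].
        by apply/eqP/esym/setIidPl; apply: subset_trans xw wy.
      move/eqP=> ->; rewrite zw wL (sub_Lcirc HL wL zw) /= andbT.
      by apply/eqP/setIidPl; apply: subset_trans zw wy.
    apply: big1 => x /andP[/andP[_ /eqP xyz] /andP[_ xw]].
    move: zw; rewrite -xyz.
    have -> : x :&: y = x by apply/setIidPl; apply: subset_trans xw wy.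
    by rewrite xw.
  case/subsetPn: wy => a aw ay.
  apply: (toggle_sum (a := a)); last by move=> x; rewrite sg_tg mulNr.
  move=> x /andP[/andP[_ xyz] /andP[_ xw]].
  have tw := tg_sub xw aw.
  by rewrite (sub_Lcirc HL wL tw) tgI // xyz wL tw.
rewrite (eq_bigr _ inner) -big_mkcondr /=.
rewrite (eq_bigl (fun w : {set V} => (w \subset y) && (z \subset w))); last first.
  move=> w /=; apply/idP/idP; first by case/andP.
  by move=> /andP[wy zw]; rewrite (sub_Lcirc HL Hy wy) wy zw.
case: eqVneq => [<-|yz].
  rewrite (eq_bigl (pred1 y)) ?big_pred1_eq ?sg2 // => w /=.
  by rewrite eqEsubset.
case: (boolP (z \subset y)) => zy; last first.
  apply: big1 => w /andP[wy zw]; case/negP: zy; exact: subset_trans zw wy.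
have : ~~ (y \subset z) by apply: contraNN yz => yz'; rewrite eqEsubset yz' zy.
case/subsetPn => a ay az.
apply: (toggle_sum (a := a)); last by move=> w; rewrite sg_tg mulrN.
by move=> w /andP[wy zw]; rewrite tg_sub // sub_tg.
Qed.
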